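(* For all $m,n\ge 3$, the state complexities of the four languages $U_m(a,b,c)\cup (U_n(a,b,c))^R$, $U_m(a,b,c)\cap (U_n(a,b,c))^R$, $U_m(a,b,c)\setminus (U_n(a,b,c))^R$ and $(U_n(a,b,c))^R\setminus U_m(a,b,c)$ are all equal to $m2^n-(m-1)$, and the state complexity of $U_m(a,b,c)\oplus (U_n(a,b,c))^R$ is $m2^n$.
   Context: The state complexity of a regular language is the number of states of its minimal complete DFA. For $n\ge 3$, $\mathcal{U}_n(a,b,c)$ is the DFA over alphabet $\{a,b,c\}$ with state set $\{0,\dots,n-1\}$, initial state $0$, final state set $\{n-1\}$, where $a$ maps $i\mapsto i+1\pmod n$; $b$ swaps states $0$ and $1$ and fixes all others; $c$ maps state $n-1$ to state $0$ and fixes all other states. $U_n(a,b,c)$ is its language. $L^R$ denotes the reversal of $L$; $\setminus$ is set difference and $\oplus$ is symmetric difference. *)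

(* Defs.v *)
From mathcomp Require Import all_boot.
Set Implicit Arguments. Unset Strict Implicit. Unset Printing Implicit Defensive.

Inductive letter := La | Lb | Lc.
Definition word := seq letter.
Definition language := word -> bool.

Record dfa := Dfa {
  dfa_state : finType;
  dfa_init : dfa_state;
  dfa_delta : dfa_state -> letter -> dfa_state;
  dfa_final : pred dfa_state }.

Definition dfa_accepts (D : dfa) (w : word) : bool :=
  @dfa_final D (foldl (@dfa_delta D) (@dfa_init D) w).

Definition recognizes (D : dfa) (L : language) : Prop :=
  forall w, dfa_accepts D w = L w.

Definition state_complexity (L : language) (k : nat) : Prop :=
  (exists D : dfa, recognizes D L /\ #|dfa_state D| = k) /\
  (forall D : dfa, recognizes D L -> k <= #|dfa_state D|).

Definition U_step (n : nat) (i : nat) (x : letter) : nat :=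
  match x with
  | La => (i.+1) %% n
  | Lb => if i == 0 then 1 else if i == 1 then 0 else i
  | Lc => if i == n.-1 then 0 else i
  end.

Definition U (n : nat) : language :=
  fun w => foldl (U_step n) 0 w == n.-1.

Definition lrev (L : language) : language := fun w => L (rev w).

(* Main.v *)
Require Import Defs.
From mathcomp Require Import all_boot.
From mathcomp Require Import zify.
From Stdlib Require Import ClassicalEpsilon.
Set Implicit Arguments. Unset Strict Implicit. Unset Printing Implicit Defensive.

Lemma step_lt k i x : 1 < k -> i < k -> U_step k i x < k.
Proof.
move=> hk hi; case: x => /=.
- by rewrite ltn_mod; lia.
- case: eqP => _; first by [].
  by case: eqP => _ //; lia.
- by case: eqP => _ //; lia.
Qed.

Lemma foldl_lt k i v : 1 < k -> i < k -> foldl (U_step k) i v < k.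
Proof. move=> hk; elim: v i => [|x v IH] i hi //=. by apply: IH; apply: step_lt. Qed.

Lemma foldl_a k q t : q < k -> foldl (U_step k) q (nseq t La) = (q + t) %% k.
Proof.
elim: t q => [|t IH] q hq /=; first by rewrite addn0 modn_small.
rewrite IH ?ltn_mod; last by lia.
by rewrite modnDml addnS addSn.
Qed.

Section Reach.
Variables m n : nat.
Hypothesis hm : 3 <= m.
Hypothesis hn : 3 <= n.

Definition reg (w : word) (q : nat) : bool := foldl (U_step n) q (rev w) == n.-1.
Definition Reach (p : nat) (B : nat -> bool) : Prop :=
  exists w : word, foldl (U_step m) 0 w = p /\ forall q, q < n -> reg w q = B q.

Lemma Reach_ext p B B' : Reach p B -> (forall q, q < n -> B q = B' q) -> Reach p B'.
Proof. by case=> w [h1 h2] he; exists w; split=> // q hq; rewrite h2 // he. Qed.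

Lemma Reach_word p B v : Reach p B ->
  Reach (foldl (U_step m) p v) (fun q => B (foldl (U_step n) q (rev v))).
Proof.
case=> w [h1 h2]; exists (w ++ v); split; first by rewrite foldl_cat h1.
move=> q hq; rewrite /reg rev_cat foldl_cat -h2 //.
by apply: foldl_lt => //; lia.
Qed.

End Reach.

Lemma modS_small x k : x < k -> x.+1 %% k = if x.+1 == k then 0 else x.+1.
Proof.
move=> h; case: eqP => [->|ne]; first by rewrite modnn.
by rewrite modn_small //; lia.
Qed.

Section Pin.
Variables m n : nat.
Hypothesis hm : 3 <= m.
Hypothesis hn : 3 <= n.

Definition g q := U_step n (U_step n q Lb) La.
Definition cell i := if i == 0 then 0 else i.+1.

Ltac deq := repeat match goal with
  | |- context [?a == ?b] =>
     (have -> : (a == b) = false by apply/eqP; lia) ||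
     (have -> : (a == b) = true by apply/eqP; lia)
  end.

Lemma g_cell i : i < n.-1 -> g (cell i) = cell (i.+1 %% n.-1).
Proof.
move=> hi; rewrite modS_small // /g /cell /=.
case: i hi => [|i] hi /=; deq => /=.
  by rewrite modn_small; lia.
case: (ltngtP i.+2 n.-1) => h; deq => //=; [by rewrite modn_small; lia | lia | ].
have -> : i.+3 = n by lia.
by rewrite modnn.
Qed.


Lemma g_iter i k : i < n.-1 -> iter k g (cell i) = cell ((i + k) %% n.-1).
Proof.
move=> hi; elim: k => [|k IH]; first by rewrite addn0 modn_small.
rewrite iterS IH g_cell; last by rewrite ltn_mod; lia.
by rewrite -addn1 modnDml addn1 addnS.
Qed.

Lemma g1 : g 1 = 1.
Proof. by rewrite /g /= modn_small //; lia. Qed.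

Lemma g_iter1 k : iter k g 1 = 1.
Proof. by elim: k => //= k ->; exact: g1. Qed.

Lemma cell_idx x : x != 1 -> cell x.-1 = x.
Proof. by rewrite /cell; case: x => [|[|x]]. Qed.

Lemma cell_inj a b : cell a = cell b -> a = b.
Proof. rewrite /cell; case: eqP; case: eqP => ? ? ?; lia. Qed.

Lemma cell_ne1 i : cell i != 1.
Proof. by rewrite /cell; case: i. Qed.

Lemma cell_lt i : i < n.-1 -> cell i < n.
Proof. rewrite /cell; case: eqP => ?; lia. Qed.

Lemma g_lt q : q < n -> g q < n.
Proof. by move=> h; rewrite /g; apply: step_lt; [lia| apply: step_lt => //; lia]. Qed.

Lemma g_iter_lt k q : q < n -> iter k g q < n.
Proof. by move=> h; elim: k => //= k IH; apply: g_lt. Qed.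

Lemma g_iterN q : q < n -> iter n.-1 g q = q.
Proof.
move=> hq; case: (q =P 1) => [->|/eqP ne]; first exact: g_iter1.
rewrite -(cell_idx ne) g_iter; last lia.
by rewrite modnDr modn_small //; lia.
Qed.

Definition tape x := (x < n) && (x != 1).

Lemma tape_iter x z : tape x -> tape z -> exists d, iter d g x = z.
Proof.
move=> /andP [hx nx] /andP [hz nz].
exists (z.-1 + (n.-1 - x.-1)).
rewrite -[X in iter _ g X](cell_idx nx) g_iter; last lia.
have -> : x.-1 + (z.-1 + (n.-1 - x.-1)) = z.-1 + n.-1 by lia.
by rewrite modnDr modn_small ?cell_idx //; lia.
Qed.

Local Notation P B := (Reach m n 0 B).

Lemma P_G B : P B -> P (fun q => B (g q)).
Proof. by move=> h; have := Reach_word hm hn [:: La; Lb] h; rewrite /= modn_small //; lia. Qed.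

Lemma P_Giter k B : P B -> P (fun q => B (iter k g q)).
Proof.
elim: k B => [|k IH] B h //.
by apply: Reach_ext (IH _ (P_G h)) _ => q _; rewrite iterS.
Qed.

Lemma P_conj (phi : nat -> nat) :
  (forall B, P B -> P (fun q => B (phi q))) ->
  (forall y, y < n -> y != n.-1 -> phi y = y) ->
  forall B x, tape x -> P B ->
  P (fun q => if q == x then B (iter (x.-1).+1 g (phi n.-1)) else B q).
Proof.
move=> hphi hfix B x /andP [hx nx] hB.
set j := n.-1.-1 - x.-1.
have hjk : x.-1.+1 + j = n.-1 by rewrite /j; lia.
apply: Reach_ext (P_Giter j (hphi _ (P_Giter x.-1.+1 hB))) _ => q hq.
have hjx : iter j g x = n.-1.
  rewrite -(cell_idx nx) g_iter; last lia.
  have -> : x.-1 + j = n.-1.-1 by rewrite /j; lia.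
  rewrite modn_small /cell; last lia.
  case: eqP => ?; lia.
case: eqP => [->|/eqP nq]; first by rewrite hjx.
rewrite hfix; first by rewrite -iterD hjk g_iterN.
  by apply: g_iter_lt.
apply/eqP => e.
have : iter x.-1.+1 g (iter j g q) = iter x.-1.+1 g (iter j g x) by rewrite e hjx.
rewrite -!iterD hjk !g_iterN //.
by move/eqP; rewrite (negbTE nq).
Qed.


Lemma P_copy B x : tape x -> P B ->
  P (fun q => if q == x then B (g x) else B q).
Proof.
move=> tx hB.
have := P_conj (phi := fun q => U_step n q Lc) _ _ tx hB.
have -> : U_step n n.-1 Lc = cell 0 by rewrite /= eqxx.
case/andP: tx => hx nx.
rewrite g_iter; last lia.
rewrite -[in g x](cell_idx nx) g_cell; last lia.
rewrite add0n; apply.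
- move=> B' h; have := Reach_word hm hn [:: Lc] h.
  by rewrite /=; case: ifP.
- by move=> y _ /negbTE /= ->.
Qed.

Lemma P_const B x : tape x -> P B ->
  P (fun q => if q == x then B 1 else B q).
Proof.
move=> tx hB.
have := P_conj (phi := fun q => U_step n (U_step n (U_step n q Lb) Lc) Lb) _ _ tx hB.
have -> : U_step n (U_step n (U_step n n.-1 Lb) Lc) Lb = 1.
  rewrite /=; deq => /=; deq => //.
rewrite g_iter1; apply.
- move=> B' h; have := Reach_word hm hn [:: Lb; Lc; Lb] h.
  by rewrite /=; deq.
- move=> y hy ny /=.
  case: (y =P 0) => [->|/eqP y0] /=; first by deq.
  case: (y =P 1) => [->|/eqP y1] /=; first by deq.
  by rewrite (negbTE ny) (negbTE y0) (negbTE y1).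
Qed.

Lemma spread d : forall B x, P B -> tape x -> B (iter d g x) = ~~ B 1 ->
  P (fun q => if q == x then ~~ B 1 else B q).
Proof.
elim: d => [|d IH] B x hB tx hd.
  apply: Reach_ext hB _ => q _; case: eqP => [->|//]; by rewrite -hd.
case/andP: (tx) => hx nx.
have tgx : tape (g x).
  rewrite -(cell_idx nx) g_cell; last lia.
  by rewrite /tape cell_ne1 cell_lt // ltn_mod; lia.
have ngx : g x != x.
  rewrite -[in g x](cell_idx nx) g_cell; last lia.
  rewrite -[X in _ != X](cell_idx nx); apply/eqP => /cell_inj.
  rewrite modS_small; last lia. case: eqP => ?; lia.
have h1 := IH B (g x) hB tgx ltac:(by rewrite -iterSr).
have h2 := P_copy (x := x) tx h1.
have g1' : (1 == g x) = false by apply/negbTE; rewrite eq_sym; case/andP: tgx.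
case: (boolP (B (g x) == B 1)) => e.
  have h3 := P_const (x := g x) tgx h2.
  apply: Reach_ext h3 _ => q _.
  rewrite g1' eqxx (eq_sym 1 x) (negbTE nx).
  case: (q =P g x) => [->|nq]; first by rewrite (negbTE ngx) (eqP e).
  by case: (q =P x).
apply: Reach_ext h2 _ => q _.
rewrite eqxx.
case: eqP => // _; case: eqP => [->|//].
by case: (B (g x)) (B 1) e => [] [].
Qed.


Lemma tape1 l : all tape l -> (1 \in l) = false.
Proof. by move=> /allP h; apply/negbTE/negP => /h /andP []. Qed.

Lemma fill1 B z l : P B -> tape z -> B z = ~~ B 1 -> all tape l ->
  P (fun q => if q \in l then ~~ B 1 else B q).
Proof.
move=> hB tz hz; elim: l => [|x l IH] /=.
  by move=> _; apply: Reach_ext hB _.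
case/andP=> tx tl.
have h := IH tl.
set B' := (fun q => if q \in l then ~~ B 1 else B q) in h.
have e1 : B' 1 = B 1 by rewrite /B' tape1.
have [d hd] := tape_iter tx tz.
have h2 := spread h tx (_ : B' (iter d g x) = ~~ B' 1).
apply: Reach_ext (h2 _) _ => [|q _].
  by rewrite hd e1 /B'; case: (z \in l).
by rewrite e1 in_cons /B'; case: (q =P x).
Qed.

Lemma fill2 B l : P B -> all tape l ->
  P (fun q => if q \in l then B 1 else B q).
Proof.
move=> hB; elim: l => [|x l IH] /=.
  by move=> _; apply: Reach_ext hB _.
case/andP=> tx tl.
have h := IH tl.
set B' := (fun q => if q \in l then B 1 else B q) in h.
have e1 : B' 1 = B 1 by rewrite /B' tape1.
apply: Reach_ext (P_const tx h) _ => q _.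
by rewrite e1 in_cons /B'; case: (q =P x).
Qed.

Lemma pin_all B z : P B -> tape z -> B z = ~~ B 1 ->
  forall T, T 1 = B 1 -> P T.
Proof.
move=> hB tz hz T hT.
set l1 := [seq x <- iota 0 n | tape x && (T x != B 1)].
set l2 := [seq x <- iota 0 n | tape x && (T x == B 1)].
have t1 : all tape l1 by apply/allP => x; rewrite mem_filter => /andP [/andP []].
have t2 : all tape l2 by apply/allP => x; rewrite mem_filter => /andP [/andP []].
have h1 := fill1 hB tz hz t1.
have h2 := fill2 h1 t2.
apply: Reach_ext h2 _ => q hq.
rewrite (tape1 t1) /l1 /l2 !mem_filter mem_iota /tape hq /=.
case: (q =P 1) => [->|nq] //=; rewrite !andbT.
case: (T q =P B 1) => [->|ne] //=.
by case: (T q) (B 1) ne => [] [].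
Qed.


Lemma P_init : P (fun q => q == n.-1).
Proof. by exists [::]. Qed.

Lemma tape0 : tape 0.
Proof. by rewrite /tape; apply/andP; split=> //; lia. Qed.

Lemma mod_pred_ne k : 0 < k -> (k.-1 %% n == k %% n) = false.
Proof.
move=> hk; have e : k = k.-1 + 1 by lia.
rewrite {2}e -{1}(addn0 k.-1) eqn_modDl mod0n modn_small //; lia.
Qed.

Lemma P_all0 T : T 1 = false -> P T.
Proof.
move=> hT; apply: (pin_all P_init (z := n.-1)).
- by rewrite /tape; apply/andP; split; [|apply/eqP]; lia.
- rewrite eqxx /=; apply/esym/eqP; lia.
- by rewrite hT; apply/esym/negbTE/eqP; lia.
Qed.

Lemma P_all T : P T.
Proof.
case: (boolP (T 1)) => hT; last by apply: P_all0; apply/negbTE.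
have hn1 : 1 < n by lia.
case: (m %% n =P 1) => hmn.
  have := Reach_word hm hn (nseq m La) (P_all0 (T := fun q => q == 2) erefl).
  rewrite foldl_a ?add0n ?modnn; last lia.
  rewrite rev_nseq => h.
  apply: (pin_all h tape0) => /=.
    rewrite !foldl_a ?add0n ?hmn; try lia.
    rewrite -modnDmr hmn modn_small //; lia.
  rewrite foldl_a; last lia.
  by rewrite -modnDmr hmn modn_small // (eqP hT); lia.
have := Reach_word hm hn (rcons (nseq m.-1 La) Lc)
  (P_all0 (T := fun q => q == m %% n) ltac:(apply/negbTE/eqP => /esym; exact: hmn)).
rewrite foldl_rcons foldl_a ?add0n; last lia.
rewrite modn_small /=; last lia.
rewrite eqxx rev_rcons /= rev_nseq => h.
apply: (pin_all h tape0) => /=.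
  have -> : (0 == n.-1) = false by apply/negbTE/eqP; lia.
  have -> : (1 == n.-1) = false by apply/negbTE/eqP; lia.
  rewrite !foldl_a ?add0n; try lia.
  rewrite mod_pred_ne; last lia.
  by rewrite add1n prednK ?eqxx //; lia.
have -> : (1 == n.-1) = false by apply/negbTE/eqP; lia.
rewrite foldl_a ?add1n ?prednK ?eqxx ?(eqP hT) //; lia.
Qed.

End Pin.

Lemma reach_all m n : 3 <= m -> 3 <= n -> forall p T, p < m -> Reach m n p T.
Proof.
move=> hm hn; elim=> [|p IH] T hp; first exact: P_all.
have := Reach_word hm hn [:: La] (IH (fun q => T ((q + n.-1) %% n)) (ltnW hp)).
rewrite /= modn_small //.
move=> h; apply: Reach_ext h _ => q hq.
rewrite modnDml -addn1 -addnA add1n prednK; last lia.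
by rewrite modnDr modn_small.
Qed.


Section Main.
Variables m n : nat.
Hypothesis hm : 3 <= m.
Hypothesis hn : 3 <= n.
Variable f : bool -> bool -> bool.

Definition Lf : language := fun w => f (U m w) (lrev (U n) w).

Lemma Lf_cat w z : Lf (w ++ z) =
  f (foldl (U_step m) (foldl (U_step m) 0 w) z == m.-1)
    (reg n w (foldl (U_step n) 0 (rev z))).
Proof. by rewrite /Lf /U /lrev /reg rev_cat !foldl_cat. Qed.

Lemma coreach r (Y : nat -> bool) : r < n -> exists z,
  foldl (U_step n) 0 (rev z) = r /\
  forall p, p < m -> (foldl (U_step m) p z == m.-1) = Y p.
Proof.
move=> hr; case: (reach_all hn hm Y hr) => w [h1 h2].
by exists (rev w); rewrite revK; split.
Qed.

Lemma lb (X : finType) (L : language) (W : X -> word) :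
  (forall x y, x != y -> exists z, L (W x ++ z) != L (W y ++ z)) ->
  forall D, recognizes D L -> #|X| <= #|dfa_state D|.
Proof.
move=> hd D hD.
pose phi x := foldl (@dfa_delta D) (@dfa_init D) (W x).
suff inj : injective phi by apply: leq_card inj.
move=> x y e; apply/eqP; apply/negPn/negP => /hd [z].
by rewrite -!hD /dfa_accepts !foldl_cat -/(phi x) -/(phi y) e eqxx.
Qed.

Definition toF (B : {ffun 'I_n -> bool}) : nat -> bool :=
  fun q => if insub q is Some i then B i else false.

Lemma toF_ord B (i : 'I_n) : toF B i = B i.
Proof. by rewrite /toF valK. Qed.

Lemma lower_gen (X : finType) (sp : X -> nat) (sB : X -> {ffun 'I_n -> bool}) :
  (forall x, sp x < m) ->
  (forall u, exists y, f y u != f y (~~ u)) ->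
  (forall x y, x != y -> (sp x != sp y) || (sB x != sB y)) ->
  (forall x y, x != y -> sB x = sB y -> exists i, f true (sB x i) != f false (sB x i)) ->
  forall D, recognizes D Lf -> #|X| <= #|dfa_state D|.
Proof.
move=> hsp hf1 hd1 hd2.
have ex x : exists w, foldl (U_step m) 0 w = sp x /\
    forall q, q < n -> reg n w q = toF (sB x) q.
  by have h := reach_all hm hn (toF (sB x)) (hsp x); exact h.
pose W x := proj1_sig (constructive_indefinite_description _ (ex x)).
have hW x : foldl (U_step m) 0 (W x) = sp x /\
    forall q, q < n -> reg n (W x) q = toF (sB x) q.
  exact: proj2_sig (constructive_indefinite_description _ (ex x)).
apply: (lb (W := W)) => x y nxy.
have [hx1 hx2] := hW x; have [hy1 hy2] := hW y.
suff [r [Y [hr hne]]] : exists r Y, r < n /\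
    f (Y (sp x)) (toF (sB x) r) != f (Y (sp y)) (toF (sB y) r).
  have [z [hz1 hz2]] := coreach Y hr.
  exists z; rewrite !Lf_cat hz1 hx1 hy1 !hz2 ?hsp //.
  by rewrite hx2 // hy2.
case: (boolP (sB x == sB y)) => [/eqP eB|nB].
  have [i hi] := hd2 x y nxy eB.
  have nsp : sp x != sp y by move: (hd1 x y nxy); rewrite eB eqxx orbF.
  exists (nat_of_ord i), (fun p => p == sp x); split => //.
  by rewrite !toF_ord eqxx (eq_sym (sp y)) (negbTE nsp) -eB.
have [i hi] : exists i, sB x i != sB y i.
  apply/existsP; apply: contraR nB => /existsPn h; apply/eqP/ffunP => i.
  by apply/eqP; rewrite -[_ == _]negbK h.
have [y0 hy0] := hf1 (sB x i).
exists (nat_of_ord i), (fun _ => y0); split => //.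
rewrite !toF_ord.
by have -> : sB y i = ~~ sB x i by case: (sB x i) (sB y i) hi => [] [].
Qed.


Definition stepO k (i : 'I_k) x : 'I_k := insubd i (U_step k i x).

Lemma val_stepO k (i : 'I_k) x : 1 < k -> val (stepO i x) = U_step k i x.
Proof. by move=> hk; rewrite /stepO val_insubd step_lt. Qed.

Let m0 : 0 < m. Proof. lia. Qed.
Let n0 : 0 < n. Proof. lia. Qed.
Definition o0m : 'I_m := Ordinal m0.
Definition o0n : 'I_n := Ordinal n0.

Definition pstate := ('I_m * {ffun 'I_n -> bool})%type.
Definition pdelta (s : pstate) x : pstate := (stepO s.1 x, [ffun i => s.2 (stepO i x)]).
Definition pinit : pstate := (o0m, [ffun i : 'I_n => val i == n.-1]).
Definition pfinal (s : pstate) := f (val s.1 == m.-1) (s.2 o0n).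

Lemma pinv w : val (foldl pdelta pinit w).1 = foldl (U_step m) 0 w /\
  forall i, (foldl pdelta pinit w).2 i = reg n w i.
Proof.
elim/last_ind: w => [|w x [IH1 IH2]]; first by split => // i; rewrite /= ffunE.
rewrite !foldl_rcons /=; split.
  by rewrite val_stepO ?IH1 //; lia.
move=> i; rewrite ffunE IH2 /reg rev_rcons /= val_stepO //; lia.
Qed.

Lemma pacc w : pfinal (foldl pdelta pinit w) = Lf w.
Proof. by have [h1 h2] := pinv w; rewrite /pfinal h1 h2. Qed.

Definition PD := Dfa pinit pdelta pfinal.

Lemma PD_rec : recognizes PD Lf.
Proof. by move=> w; rewrite /dfa_accepts /= pacc. Qed.

Lemma PD_card : #|dfa_state PD| = m * 2 ^ n.
Proof. by rewrite /= card_prod card_ord card_ffun card_bool card_ord. Qed.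

Lemma sc_xor : (forall u, exists y, f y u != f y (~~ u)) ->
  (forall v, f true v != f false v) ->
  state_complexity Lf (m * 2 ^ n).
Proof.
move=> hf1 hfx; split; first by exists PD; split; [exact: PD_rec | exact: PD_card].
move=> D hD; rewrite -PD_card.
apply: (lower_gen (sp := fun s : pstate => val s.1) (sB := fun s : pstate => s.2)) hf1 _ _ D hD.
- by move=> [p B] /=.
- move=> [p B] [p' B'] /=; apply: contraR; rewrite negb_or !negbK => /andP [/eqP e1 /eqP ->].
  by rewrite (val_inj e1).
- by move=> x y _ _; exists o0n; apply: hfx.
Qed.

Variable e : bool.
Hypothesis hfe : forall x, f x e = f false e.
Definition E : {ffun 'I_n -> bool} := [ffun => e].
Definition mstate := option ('I_m * {B : {ffun 'I_n -> bool} | B != E}).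
Definition conv (s : pstate) : mstate :=
  if insub s.2 is Some B then Some (s.1, B) else None.
Definition mdelta (s : mstate) x : mstate :=
  if s is Some (p, B) then conv (pdelta (p, val B) x) else None.
Definition mfinal (s : mstate) :=
  if s is Some (p, B) then pfinal (p, val B) else f false e.
Definition MD := Dfa (conv pinit) mdelta mfinal.

Lemma minv w : foldl mdelta (conv pinit) w = conv (foldl pdelta pinit w).
Proof.
elim/last_ind: w => [|w x IH] //.
rewrite !foldl_rcons IH.
case: (foldl pdelta pinit w) => p B.
rewrite /conv /=; case: insubP => [B' _ hB'|].
  by rewrite /= hB'.
rewrite negbK => /eqP -> /=.
rewrite insubN // negbK; apply/eqP/ffunP => i; by rewrite !ffunE.
Qed.

Lemma MD_rec : recognizes MD Lf.
Proof.
move=> w; rewrite /dfa_accepts /= minv -pacc.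
case: (foldl pdelta pinit w) => p B.
rewrite /conv /=; case: insubP => [B' _ hB'|] /=.
  by rewrite hB'.
by rewrite negbK => /eqP -> ; rewrite /pfinal /= ffunE hfe.
Qed.

Lemma MD_card : #|dfa_state MD| = m * 2 ^ n - (m - 1).
Proof.
rewrite /= card_option card_prod card_ord card_sig.
have -> : #|[pred B : {ffun 'I_n -> bool} | B != E]| = (2 ^ n).-1.
  have := cardC1 E; rewrite card_ffun card_bool card_ord => <-; exact: eq_card.
have : 1 <= 2 ^ n by rewrite expn_gt0.
set K := 2 ^ n => hK.
rewrite -subn1 mulnBr muln1.
have : m <= m * K by rewrite leq_pmulr.
lia.
Qed.

Lemma sc_merged : (forall u, exists y, f y u != f y (~~ u)) ->
  f true (~~ e) != f false (~~ e) ->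
  state_complexity Lf (m * 2 ^ n - (m - 1)).
Proof.
move=> hf1 hf2; split; first by exists MD; split; [exact: MD_rec | exact: MD_card].
move=> D hD; rewrite -MD_card.
apply: (lower_gen (sp := fun s : mstate => if s is Some (p, B) then val p else 0)
                  (sB := fun s : mstate => if s is Some (p, B) then val B else E)) hf1 _ _ D hD.
- by move=> [[p B]|] //=; lia.
- move=> [[p B]|] [[p' B']|] //=.
  + apply: contraR; rewrite negb_or !negbK => /andP [/eqP e1 /eqP e2].
    by rewrite (val_inj e1) (val_inj e2).
  + by move=> _; rewrite (valP B) orbT.
  + by move=> _; rewrite (eq_sym E) (valP B') orbT.
- have key (B : {B : {ffun 'I_n -> bool} | B != E}) :
      exists i, f true (val B i) != f false (val B i).
    have [i hi] : exists i, val B i != e.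
      apply/existsP; apply: contraR (valP B) => /existsPn h; apply/eqP/ffunP => i.
      by rewrite ffunE; apply/eqP; rewrite -[_ == _]negbK h.
    by exists i; have -> : val B i = ~~ e by case: (val B i) e hi => [] [].
  move=> [[p B]|] [[p' B']|] //= _; try by move=> _; apply: key.
  by case: B' => B0 hB0 /= h; rewrite -h eqxx in hB0.
Qed.

End Main.

Theorem theorem2 (m n : nat) (hm : 3 <= m) (hn : 3 <= n) :
  [/\ state_complexity (fun w => U m w || lrev (U n) w) (m * 2 ^ n - (m - 1)),
      state_complexity (fun w => U m w && lrev (U n) w) (m * 2 ^ n - (m - 1)),
      state_complexity (fun w => U m w && ~~ lrev (U n) w) (m * 2 ^ n - (m - 1)),
      state_complexity (fun w => lrev (U n) w && ~~ U m w) (m * 2 ^ n - (m - 1))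
    & state_complexity (fun w => U m w (+) lrev (U n) w) (m * 2 ^ n)].
Proof.
split.
- apply: (@sc_merged m n hm hn orb true); try (by case); try done.
  by case; [exists false | exists false].
- apply: (@sc_merged m n hm hn andb false); try (by case); try done.
  by case; [exists true | exists true].
- apply: (@sc_merged m n hm hn (fun x y => x && ~~ y) true); try (by case); try done.
  by case; [exists true | exists true].
- apply: (@sc_merged m n hm hn (fun x y => y && ~~ x) false); try (by case); try done.
  by case; [exists false | exists false].
- apply: (@sc_xor m n hm hn addb); try (by case); try done.
  by case; [exists false | exists false].
Qed.
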